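(* Let $r\ge 2$ be an even integer, $T>0$, and let $u$ be a smooth function on $[a,b]\times[0,T]$ with $u(a,t)=u(b,t)=0$. Let $S[u]=\int_0^T\int_a^b \frac1r|u_x|^r\,dx\,dt$. For smooth $w(x,t)$ with $w(x,0)=w(x,T)=0$, consider the constrained variation $\delta u=w_t-wu_x+uw_x$, and the first variation $\delta S=\int_0^T\int_a^b |u_x|^{r-2}u_x\,(\delta u)_x\,dx\,dt$. Then $$\delta S=\int_0^T\int_a^b\Big(\big(|u_x|^{r-2}u_x\big)_{xt}+\big(|u_x|^{r-2}u_x\big)_xu_x+\Big(\big(|u_x|^{r-2}u_x\big)_xu\Big)_x\Big)w\,dx\,dt,$$ so that $\delta S=0$ for all such $w$ if and only if $u$ satisfies the $r$-Hunter-Saxton equation $$\big(|u_x|^{r-2}u_x\big)_{xt}+\big(|u_x|^{r-2}u_x\big)_xu_x+\Big(\big(|u_x|^{r-2}u_x\big)_xu\Big)_x=0.$$ That is, the $r$-Hunter-Saxton equation is the Euler-Poincaré equation for the Lagrangian $l[u]=\int_a^b\frac1r|u_x|^r\,dx$.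
   Context: The constrained variations $\delta u=w_t-wu_x+uw_x$ are those induced on the Eulerian velocity $u$ by variations of a time-dependent family of diffeomorphisms $g$ of $[a,b]$ with $g_t(x,t)=u(g(x,t),t)$; the Euler-Poincaré equation is the stationarity condition of the action under such variations. *)

(* Defs.v *)
From Stdlib Require Import Reals Lra.
From Coquelicot Require Import Coquelicot.
Open Scope R_scope.

Definition dx (f : R -> R -> R) : R -> R -> R :=
  fun x t => Derive (fun y => f y t) x.
Definition dt (f : R -> R -> R) : R -> R -> R :=
  fun x t => Derive (fun s => f x s) t.

Definition cont2 (f : R -> R -> R) : Prop :=
  forall p : R * R, continuous (fun q : R * R => f (fst q) (snd q)) p.

Fixpoint Cn (n : nat) (f : R -> R -> R) : Prop :=
  match n with
  | O => cont2 f
  | S k => cont2 f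
           /\ (forall x t, ex_derive (fun y => f y t) x)
           /\ (forall x t, ex_derive (fun s => f x s) t)
           /\ Cn k (dx f) /\ Cn k (dt f)
  end.

Definition smooth (f : R -> R -> R) : Prop := forall n, Cn n f.

Definition mom (r : nat) (u : R -> R -> R) : R -> R -> R :=
  fun x t => Rabs (dx u x t) ^ (r - 2) * dx u x t.

Definition delta_u (u w : R -> R -> R) : R -> R -> R :=
  fun x t => dt w x t - w x t * dx u x t + u x t * dx w x t.

Definition deltaS (r : nat) (a b T : R) (u w : R -> R -> R) : R :=
  RInt (fun t => RInt (fun x => mom r u x t * dx (delta_u u w) x t) a b) 0 T.

Definition rHS (r : nat) (u : R -> R -> R) : R -> R -> R :=
  fun x t => dt (dx (mom r u)) x t + dx (mom r u) x t * dx u x t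
             + dx (fun y s => dx (mom r u) y s * u y s) x t.

Definition admissible (a b T : R) (w : R -> R -> R) : Prop :=
  smooth w
  /\ (forall x, a <= x <= b -> w x 0 = 0 /\ w x T = 0)
  /\ (forall t, 0 <= t <= T -> w a t = 0 /\ w b t = 0).

(* Main.v *)
Require Import Defs.
From Stdlib Require Import Reals Arith Lra Lia FunctionalExtensionality.
From Coquelicot Require Import Coquelicot.
Open Scope R_scope.

Lemma cont2_plus f g : cont2 f -> cont2 g -> cont2 (fun x t => f x t + g x t).
Proof. intros Hf Hg p. exact (continuous_plus _ _ p (Hf p) (Hg p)). Qed.
Lemma cont2_mult f g : cont2 f -> cont2 g -> cont2 (fun x t => f x t * g x t).
Proof. intros Hf Hg p. exact (continuous_mult _ _ p (Hf p) (Hg p)). Qed.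
Lemma cont2_const c : cont2 (fun _ _ => c).
Proof. intros p. apply continuous_const. Qed.
Lemma cont2_x : cont2 (fun x _ => x).
Proof. intros [p q]. apply continuous_fst. Qed.
Lemma cont2_t : cont2 (fun _ t => t).
Proof. intros [p q]. apply continuous_snd. Qed.

Lemma Cn_cont n f : Cn n f -> cont2 f.
Proof. destruct n; simpl; tauto. Qed.

Lemma Cn_S n f : Cn (S n) f -> Cn n f.
Proof.
  revert f; induction n; intros f H.
  - simpl in *; tauto.
  - destruct H as (H1 & H2 & H3 & H4 & H5).
    split; [exact H1|]. split; [exact H2|]. split; [exact H3|].
    split; apply IHn; assumption.
Qed.

Lemma Cn_plus n : forall f g, Cn n f -> Cn n g -> Cn n (fun x t => f x t + g x t).
Proof.
  induction n; intros f g Hf Hg.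
  - apply cont2_plus; assumption.
  - destruct Hf as (F1 & F2 & F3 & F4 & F5).
    destruct Hg as (G1 & G2 & G3 & G4 & G5).
    split; [apply cont2_plus; assumption|].
    split; [intros x t; apply (ex_derive_plus (fun y => f y t) (fun y => g y t)); auto|].
    split; [intros x t; apply (ex_derive_plus (fun y => f x y) (fun y => g x y)); auto|].
    split.
    + replace (dx (fun x t => f x t + g x t)) with (fun x t => dx f x t + dx g x t).
      * apply IHn; assumption.
      * apply functional_extensionality; intro x; apply functional_extensionality; intro t.
        unfold dx. symmetry. apply (Derive_plus (fun y => f y t) (fun y => g y t)); auto.
    + replace (dt (fun x t => f x t + g x t)) with (fun x t => dt f x t + dt g x t).
      * apply IHn; assumption.
      * apply functional_extensionality; intro x; apply functional_extensionality; intro t.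
        unfold dt. symmetry. apply (Derive_plus (fun y => f x y) (fun y => g x y)); auto.
Qed.

Lemma Cn_mult n : forall f g, Cn n f -> Cn n g -> Cn n (fun x t => f x t * g x t).
Proof.
  induction n; intros f g Hf Hg.
  - apply cont2_mult; assumption.
  - pose proof (Cn_S _ _ Hf) as Hf'. pose proof (Cn_S _ _ Hg) as Hg'.
    destruct Hf as (F1 & F2 & F3 & F4 & F5).
    destruct Hg as (G1 & G2 & G3 & G4 & G5).
    split; [apply cont2_mult; assumption|].
    split; [intros; apply ex_derive_mult; auto|].
    split; [intros; apply ex_derive_mult; auto|].
    split.
    + replace (dx (fun x t => f x t * g x t)) with (fun x t => dx f x t * g x t + f x t * dx g x t).
      * apply Cn_plus; apply IHn; assumption.
      * apply functional_extensionality; intro x; apply functional_extensionality; intro t.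
        unfold dx. symmetry. apply (Derive_mult (fun y => f y t) (fun y => g y t)); auto.
    + replace (dt (fun x t => f x t * g x t)) with (fun x t => dt f x t * g x t + f x t * dt g x t).
      * apply Cn_plus; apply IHn; assumption.
      * apply functional_extensionality; intro x; apply functional_extensionality; intro t.
        unfold dt. symmetry. apply (Derive_mult (fun y => f x y) (fun y => g x y)); auto.
Qed.

Lemma Cn_const n : forall c, Cn n (fun _ _ => c).
Proof.
  induction n; intros c.
  - apply cont2_const.
  - split; [apply cont2_const|].
    split; [intros; apply ex_derive_const|].
    split; [intros; apply ex_derive_const|].
    assert (E1 : dx (fun _ _ => c) = fun _ _ => 0).
    { apply functional_extensionality; intro x; apply functional_extensionality; intro t.
      unfold dx. apply Derive_const. }
    assert (E2 : dt (fun _ _ => c) = fun _ _ => 0).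
    { apply functional_extensionality; intro x; apply functional_extensionality; intro t.
      unfold dt. apply Derive_const. }
    rewrite E1, E2. split; apply IHn.
Qed.

Lemma Cn_x n : Cn n (fun x _ => x).
Proof.
  destruct n.
  - apply cont2_x.
  - split; [apply cont2_x|].
    split; [intros; apply ex_derive_id|].
    split; [intros; apply ex_derive_const|].
    assert (E1 : dx (fun x _ => x) = fun _ _ => 1).
    { apply functional_extensionality; intro x; apply functional_extensionality; intro t.
      unfold dx. apply Derive_id. }
    assert (E2 : dt (fun x _ => x) = fun _ _ => 0).
    { apply functional_extensionality; intro x; apply functional_extensionality; intro t.
      unfold dt. apply Derive_const. }
    rewrite E1, E2. split; apply Cn_const.
Qed.

Lemma Cn_t n : Cn n (fun _ t => t).
Proof.
  destruct n.
  - apply cont2_t.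
  - split; [apply cont2_t|].
    split; [intros; apply ex_derive_const|].
    split; [intros; apply ex_derive_id|].
    assert (E1 : dx (fun _ t => t) = fun _ _ => 0).
    { apply functional_extensionality; intro x; apply functional_extensionality; intro t.
      unfold dx. apply Derive_const. }
    assert (E2 : dt (fun _ t => t) = fun _ _ => 1).
    { apply functional_extensionality; intro x; apply functional_extensionality; intro t.
      unfold dt. apply Derive_id. }
    rewrite E1, E2. split; apply Cn_const.
Qed.

Lemma sm_plus f g : smooth f -> smooth g -> smooth (fun x t => f x t + g x t).
Proof. intros Hf Hg n; apply Cn_plus; auto. Qed.
Lemma sm_mult f g : smooth f -> smooth g -> smooth (fun x t => f x t * g x t).
Proof. intros Hf Hg n; apply Cn_mult; auto. Qed.
Lemma sm_const c : smooth (fun _ _ => c).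
Proof. intros n; apply Cn_const. Qed.
Lemma sm_x : smooth (fun x _ => x).
Proof. intros n; apply Cn_x. Qed.
Lemma sm_t : smooth (fun _ t => t).
Proof. intros n; apply Cn_t. Qed.
Lemma sm_minus f g : smooth f -> smooth g -> smooth (fun x t => f x t - g x t).
Proof.
  intros Hf Hg.
  assert (E : (fun x t => f x t - g x t) = (fun x t => f x t + (fun _ _ => -1) x t * g x t)).
  { apply functional_extensionality; intro x; apply functional_extensionality; intro t. ring. }
  rewrite E. apply sm_plus; auto. apply sm_mult; auto. apply sm_const.
Qed.
Lemma sm_dx f : smooth f -> smooth (dx f).
Proof. intros H n. destruct (H (S n)) as (_&_&_&A&_). exact A. Qed.
Lemma sm_dt f : smooth f -> smooth (dt f).
Proof. intros H n. destruct (H (S n)) as (_&_&_&_&A). exact A. Qed.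
Lemma sm_cont f : smooth f -> cont2 f.
Proof. intros H. exact (H O). Qed.
Lemma sm_exdx f : smooth f -> forall x t, ex_derive (fun y => f y t) x.
Proof. intros H. destruct (H 1%nat) as (_&A&_). exact A. Qed.
Lemma sm_exdt f : smooth f -> forall x t, ex_derive (fun s => f x s) t.
Proof. intros H. destruct (H 1%nat) as (_&_&A&_). exact A. Qed.
Lemma sm_pow f k : smooth f -> smooth (fun x t => f x t ^ k).
Proof.
  intros H. induction k.
  - change (smooth (fun _ _ => 1)). apply sm_const.
  - change (smooth (fun x t => f x t * f x t ^ k)). apply sm_mult; auto.
Qed.

Lemma mom_eq r u : (2 <= r)%nat -> Nat.Even r ->
  mom r u = fun x t => dx u x t ^ (r - 2) * dx u x t.
Proof.
  intros H2 [k Hk].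
  apply functional_extensionality; intro x; apply functional_extensionality; intro t.
  unfold mom. f_equal.
  assert (E : (r - 2 = 2 * (k - 1))%nat) by lia.
  rewrite E, RPow_abs, pow_mult. apply Rabs_right.
  apply Rle_ge, pow_le. apply pow2_ge_0.
Qed.

Lemma cont2_cx f t x : cont2 f -> continuous (fun y => f y t) x.
Proof.
  intros H.
  apply (continuous_comp_2 (fun y : R => y) (fun _ : R => t) f x).
  - apply continuous_id.
  - apply continuous_const.
  - apply H.
Qed.

Lemma cont2_ct f t x : cont2 f -> continuous (fun s => f x s) t.
Proof.
  intros H.
  apply (continuous_comp_2 (fun _ : R => x) (fun s : R => s) f t).
  - apply continuous_const.
  - apply continuous_id.
  - apply H.
Qed.

Lemma cont2_swap f s x : cont2 f -> continuity_2d_pt (fun u v => f v u) s x.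
Proof.
  intros H. apply continuity_2d_pt_filterlim.
  apply (continuous_comp_2 (fun z : R * R => snd z) (fun z : R * R => fst z) f (s, x)).
  - apply continuous_snd.
  - apply continuous_fst.
  - apply H.
Qed.

Lemma param_derive h a b s : smooth h ->
  is_derive (fun s => RInt (fun x => h x s) a b) s (RInt (fun x => dt h x s) a b).
Proof.
  intros H.
  apply (is_derive_RInt_param (fun s x => h x s) a b s).
  - apply filter_forall. intros s0 x _. apply (sm_exdt h H).
  - intros x _. apply (cont2_swap (dt h)). apply sm_cont, sm_dt, H.
  - apply filter_forall. intros s0. apply (ex_RInt_continuous (V:=R_CompleteNormedModule) (fun t => h t s0)). intros z _.
    apply cont2_cx, sm_cont, H.
Qed.

Lemma param_cont h a b s : smooth h ->
  continuous (fun s => RInt (fun x => h x s) a b) s.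
Proof.
  intros H. apply (ex_derive_continuous (K:=R_AbsRing) (V:=R_NormedModule)). eexists. apply param_derive, H.
Qed.

Lemma ex_sub (f : R -> R) a b p q : (forall x, a <= x <= b -> continuous f x) ->
  a <= p -> p <= q -> q <= b -> ex_RInt f p q.
Proof.
  intros H H1 H2 H3.
  apply (ex_RInt_continuous (V:=R_CompleteNormedModule)).
  intros z Hz. rewrite Rmin_left in Hz by lra. rewrite Rmax_right in Hz by lra.
  apply H; lra.
Qed.

Lemma pos_lemma (f : R -> R) a b c : a < c < b ->
  (forall x, a <= x <= b -> continuous f x) ->
  (forall x, a < x < b -> 0 <= f x) -> 0 < f c -> 0 < RInt f a b.
Proof.
  intros Hc Hcont Hpos Hfc.
  assert (Hp : 0 < f c / 2) by lra.
  destruct (proj1 (filterlim_locally (F:=locally c) f (f c)) (Hcont c ltac:(lra)) (mkposreal _ Hp)) as [d Hd].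
  unfold ball in Hd; simpl in Hd. unfold AbsRing_ball, abs, minus, plus, opp in Hd; simpl in Hd.
  pose proof (cond_pos d) as Hd0.
  set (l := Rmax a (c - d/2)). set (h := Rmin b (c + d/2)).
  assert (Hl1 : a <= l) by apply Rmax_l.
  assert (Hl2 : c - d/2 <= l) by apply Rmax_r.
  assert (Hl3 : l < c) by (unfold l; apply Rmax_lub_lt; lra).
  assert (Hh1 : h <= b) by apply Rmin_l.
  assert (Hh2 : h <= c + d/2) by apply Rmin_r.
  assert (Hh3 : c < h) by (unfold h; apply Rmin_glb_lt; lra).
  rewrite <- (RInt_Chasles f a l b) by (apply (ex_sub f a b); [exact Hcont|lra|lra|lra]).
  rewrite <- (RInt_Chasles f l h b) by (apply (ex_sub f a b); [exact Hcont|lra|lra|lra]).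
  change (plus ?x ?y) with (x + y).
  assert (A1 : 0 <= RInt f a l).
  { apply RInt_ge_0; [lra| apply (ex_sub f a b); [exact Hcont|lra|lra|lra]|]. intros; apply Hpos; lra. }
  assert (A2 : 0 <= RInt f h b).
  { apply RInt_ge_0; [lra| apply (ex_sub f a b); [exact Hcont|lra|lra|lra]|]. intros; apply Hpos; lra. }
  assert (A3 : 0 < RInt f l h).
  { apply RInt_gt_0; [lra| |].
    - intros x Hx. assert (Hx' : Rabs (x + - c) < d).
      { apply Rabs_def1; lra. }
      specialize (Hd x Hx'). apply Rabs_def2 in Hd. lra.
    - intros x Hx; apply Hcont; lra. }
  change (plus ?x ?y) with (x + y). lra.
Qed.

Lemma closure_zero f a b T : cont2 f -> a < b -> 0 < T ->
  (forall x t, a < x < b -> 0 < t < T -> f x t = 0) ->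
  forall x t, a <= x <= b -> 0 <= t <= T -> f x t = 0.
Proof.
  intros Hf Hab HT Hz x0 t0 Hx Ht.
  destruct (Req_dec (f x0 t0) 0) as [E|NE]; [exact E|exfalso].
  assert (Hp : 0 < Rabs (f x0 t0)) by (apply Rabs_pos_lt; exact NE).
  destruct (proj1 (filterlim_locally (F:=locally (x0,t0)) (fun q : R * R => f (fst q) (snd q)) _) (Hf (x0, t0)) (mkposreal _ Hp)) as [d Hd].
  pose proof (cond_pos d) as Hd0.
  set (e := Rmin (d/2) ((b - a)/4)).
  set (g := Rmin (d/2) (T/4)).
  assert (He1 : e <= d/2) by apply Rmin_l.
  assert (He2 : e <= (b-a)/4) by apply Rmin_r.
  assert (He3 : 0 < e) by (apply Rmin_glb_lt; lra).
  assert (Hg1 : g <= d/2) by apply Rmin_l.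
  assert (Hg2 : g <= T/4) by apply Rmin_r.
  assert (Hg3 : 0 < g) by (apply Rmin_glb_lt; lra).
  assert (Ex : exists x1, a < x1 < b /\ Rabs (x1 + - x0) < d).
  { destruct (Rlt_le_dec x0 ((a+b)/2)).
    - exists (x0 + e). split; [lra|]. apply Rabs_def1; lra.
    - exists (x0 - e). split; [lra|]. apply Rabs_def1; lra. }
  assert (Et : exists t1, 0 < t1 < T /\ Rabs (t1 + - t0) < d).
  { destruct (Rlt_le_dec t0 (T/2)).
    - exists (t0 + g). split; [lra|]. apply Rabs_def1; lra.
    - exists (t0 - g). split; [lra|]. apply Rabs_def1; lra. }
  destruct Ex as [x1 [Hx1 Dx1]]. destruct Et as [t1 [Ht1 Dt1]].
  specialize (Hd (x1, t1)).
  assert (HB : ball (x0, t0) d (x1, t1)).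
  { split; simpl; unfold AbsRing_ball, abs, minus, plus, opp; simpl; assumption. }
  specialize (Hd HB).
  unfold ball in Hd; simpl in Hd. unfold AbsRing_ball, abs, minus, plus, opp in Hd; simpl in Hd.
  rewrite (Hz x1 t1 Hx1 Ht1) in Hd.
  replace (0 + - f x0 t0) with (- f x0 t0) in Hd by ring.
  rewrite Rabs_Ropp in Hd. lra.
Qed.

Lemma sm_mom r u : (2 <= r)%nat -> Nat.Even r -> smooth u -> smooth (mom r u).
Proof.
  intros H2 He Hu. rewrite (mom_eq r u H2 He).
  apply sm_mult; [apply sm_pow|]; apply sm_dx, Hu.
Qed.

Lemma sm_rHS r u : (2 <= r)%nat -> Nat.Even r -> smooth u -> smooth (rHS r u).
Proof.
  intros H2 He Hu. pose proof (sm_mom r u H2 He Hu) as Hm.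
  unfold rHS. apply sm_plus; [apply sm_plus|].
  - apply sm_dt, sm_dx, Hm.
  - apply sm_mult; apply sm_dx; assumption.
  - apply sm_dx, sm_mult; [apply sm_dx|]; assumption.
Qed.

Lemma sm_du u w : smooth u -> smooth w -> smooth (delta_u u w).
Proof.
  intros Hu Hw. unfold delta_u. apply sm_plus; [apply sm_minus|].
  - apply sm_dt, Hw.
  - apply sm_mult; [|apply sm_dx]; assumption.
  - apply sm_mult; [|apply sm_dx]; assumption.
Qed.

Lemma ident r u w x t : (2 <= r)%nat -> Nat.Even r -> smooth u -> smooth w ->
  mom r u x t * dx (delta_u u w) x t =
  rHS r u x t * w x t
  + dx (fun y s => mom r u y s * delta_u u w y s - (dx (mom r u) y s * u y s) * w y s) x t
  - dt (fun y s => dx (mom r u) y s * w y s) x t.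
Proof.
  intros H2 He Hu Hw.
  pose proof (sm_mom r u H2 He Hu) as Hm.
  pose proof (sm_du u w Hu Hw) as Hd.
  assert (HP : smooth (fun y s => dx (mom r u) y s * u y s)) by (apply sm_mult; [apply sm_dx|]; assumption).
  assert (EG : dx (fun y s => mom r u y s * delta_u u w y s - (dx (mom r u) y s * u y s) * w y s) x t
     = (dx (mom r u) x t * delta_u u w x t + mom r u x t * dx (delta_u u w) x t)
       - (dx (fun y s => dx (mom r u) y s * u y s) x t * w x t + (dx (mom r u) x t * u x t) * dx w x t)).
  { unfold dx at 1.
    rewrite (Derive_minus (fun y => mom r u y t * delta_u u w y t) (fun y => (dx (mom r u) y t * u y t) * w y t)).
    - rewrite (Derive_mult (fun y => mom r u y t) (fun y => delta_u u w y t)) by (apply sm_exdx; assumption).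
      rewrite (Derive_mult (fun y => dx (mom r u) y t * u y t) (fun y => w y t)) by (apply (sm_exdx _ HP) || apply sm_exdx; assumption).
      reflexivity.
    - apply ex_derive_mult; apply sm_exdx; assumption.
    - apply ex_derive_mult; [apply (sm_exdx _ HP)|apply sm_exdx; assumption]. }
  assert (EH : dt (fun y s => dx (mom r u) y s * w y s) x t
     = dt (dx (mom r u)) x t * w x t + dx (mom r u) x t * dt w x t).
  { unfold dt at 1.
    rewrite (Derive_mult (fun s => dx (mom r u) x s) (fun s => w x s)).
    - reflexivity.
    - apply sm_exdt, sm_dx, Hm.
    - apply sm_exdt, Hw. }
  rewrite EG, EH. unfold rHS.
  assert (Edu : delta_u u w x t = dt w x t - w x t * dx u x t + u x t * dx w x t) by reflexivity.
  rewrite Edu. ring.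
Qed.

Lemma ex_sm (h : R -> R -> R) a b t : smooth h -> ex_RInt (fun x => h x t) a b.
Proof.
  intros H. apply (ex_RInt_continuous (V:=R_CompleteNormedModule) (fun x => h x t)).
  intros z _. apply cont2_cx, sm_cont, H.
Qed.

Lemma ex_sm_outer (h : R -> R -> R) a b c d : smooth h ->
  ex_RInt (fun t => RInt (fun x => h x t) a b) c d.
Proof.
  intros H. apply (ex_RInt_continuous (V:=R_CompleteNormedModule) (fun t => RInt (fun x => h x t) a b)).
  intros z _. apply param_cont, H.
Qed.

Lemma part1 r a b T u w : (2 <= r)%nat -> Nat.Even r -> a < b -> 0 < T ->
  smooth u -> (forall t, 0 <= t <= T -> u a t = 0 /\ u b t = 0) ->
  admissible a b T w ->
  deltaS r a b T u w = RInt (fun t => RInt (fun x => rHS r u x t * w x t) a b) 0 T.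
Proof.
  intros H2 He Hab HT Hu Hbd [Hw [HwT Hwab]].
  pose proof (sm_mom r u H2 He Hu) as Hm.
  pose proof (sm_du u w Hu Hw) as Hd.
  pose proof (sm_rHS r u H2 He Hu) as Hr.
  set (G := fun y s => mom r u y s * delta_u u w y s - (dx (mom r u) y s * u y s) * w y s).
  set (H := fun y s => dx (mom r u) y s * w y s).
  assert (HG : smooth G).
  { unfold G. apply sm_minus; apply sm_mult; try assumption. apply sm_mult; [apply sm_dx|]; assumption. }
  assert (HH : smooth H) by (unfold H; apply sm_mult; [apply sm_dx|]; assumption).
  assert (HrW : smooth (fun x t => rHS r u x t * w x t)) by (apply sm_mult; assumption).
  assert (HdtH : smooth (dt H)) by (apply sm_dt, HH).
  assert (Inner : forall t, 0 < t < T ->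
    RInt (fun x => mom r u x t * dx (delta_u u w) x t) a b =
    RInt (fun x => rHS r u x t * w x t) a b - RInt (fun x => dt H x t) a b).
  { intros t Ht.
    rewrite (RInt_ext _ (fun x => (rHS r u x t * w x t + dx G x t) - dt H x t)).
    2:{ intros x _. apply ident; assumption. }
    rewrite (RInt_minus (V:=R_CompleteNormedModule) (fun x => rHS r u x t * w x t + dx G x t) (fun x => dt H x t)).
    2:{ apply (ex_sm (fun x t => rHS r u x t * w x t + dx G x t)). apply sm_plus; [exact HrW| apply sm_dx, HG]. }
    2:{ apply (ex_sm (dt H)), HdtH. }
    rewrite (RInt_plus (V:=R_CompleteNormedModule) (fun x => rHS r u x t * w x t) (fun x => dx G x t)).
    2:{ apply (ex_sm (fun x t => rHS r u x t * w x t)), HrW. }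
    2:{ apply (ex_sm (dx G)), sm_dx, HG. }
    assert (EG : RInt (fun x => dx G x t) a b = G b t - G a t).
    { apply (RInt_Derive (fun y => G y t)).
      - intros; apply sm_exdx, HG.
      - intros; apply (cont2_cx (dx G)), sm_cont, sm_dx, HG. }
    assert (Z : forall c, (forall s, 0 <= s <= T -> w c s = 0) -> (forall s, 0 <= s <= T -> u c s = 0) -> G c t = 0).
    { intros c Hc Hcu. unfold G, delta_u.
      assert (Edt : dt w c t = 0).
      { unfold dt. rewrite (Derive_ext_loc (fun s => w c s) (fun _ => 0)).
        - apply Derive_const.
        - assert (Hp : 0 < Rmin t (T - t)) by (apply Rmin_glb_lt; lra).
          exists (mkposreal _ Hp). intros y Hy.
          unfold ball in Hy; simpl in Hy. unfold AbsRing_ball, abs, minus, plus, opp in Hy; simpl in Hy.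
          pose proof (Rmin_l t (T - t)). pose proof (Rmin_r t (T - t)).
          apply Rabs_def2 in Hy. apply Hc. lra. }
      rewrite Edt, (Hc t), (Hcu t) by lra. ring. }
    assert (Ga : G a t = 0).
    { apply Z; intros s Hs; [apply (Hwab s Hs)|apply (Hbd s Hs)]. }
    assert (Gb : G b t = 0).
    { apply Z; intros s Hs; [apply (Hwab s Hs)|apply (Hbd s Hs)]. }
    rewrite EG, Ga, Gb. unfold minus, plus, opp; simpl. ring. }
  unfold deltaS.
  rewrite (RInt_ext _ (fun t => RInt (fun x => rHS r u x t * w x t) a b - RInt (fun x => dt H x t) a b)).
  2:{ intros t Ht. rewrite Rmin_left in Ht by lra. rewrite Rmax_right in Ht by lra. apply Inner; lra. }
  rewrite (RInt_minus (V:=R_CompleteNormedModule) (fun t => RInt (fun x => rHS r u x t * w x t) a b) (fun t => RInt (fun x => dt H x t) a b)).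
  2:{ apply ex_sm_outer, HrW. }
  2:{ apply ex_sm_outer, HdtH. }
  assert (EK : RInt (fun t => RInt (fun x => dt H x t) a b) 0 T =
               RInt (fun x => H x T) a b - RInt (fun x => H x 0) a b).
  { apply is_RInt_unique.
    apply (is_RInt_derive (fun s => RInt (fun x => H x s) a b)).
    - intros; apply param_derive, HH.
    - intros; apply param_cont, HdtH. }
  assert (Z : forall s, (forall x, a <= x <= b -> w x s = 0) -> RInt (fun x => H x s) a b = 0).
  { intros s Hs. rewrite (RInt_ext _ (fun _ => 0)).
    - rewrite RInt_const. unfold scal; simpl. unfold mult; simpl. ring.
    - intros x Hx. rewrite Rmin_left in Hx by lra. rewrite Rmax_right in Hx by lra.
      unfold H. rewrite Hs by lra. apply Rmult_0_r. }
  rewrite EK, !Z.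
  - unfold minus, plus, opp; simpl. ring.
  - intros x Hx; apply (HwT x Hx).
  - intros x Hx; apply (HwT x Hx).
Qed.

Lemma RInt_zero a b : RInt (fun _ => 0) a b = 0.
Proof. rewrite RInt_const. unfold scal; simpl. unfold mult; simpl. ring. Qed.

Theorem mainTheorem2 (r : nat) (a b T : R) (u : R -> R -> R) :
  (2 <= r)%nat -> Nat.Even r -> a < b -> 0 < T ->
  smooth u ->
  (forall t, 0 <= t <= T -> u a t = 0 /\ u b t = 0) ->
  (forall w, admissible a b T w ->
     deltaS r a b T u w =
     RInt (fun t => RInt (fun x => rHS r u x t * w x t) a b) 0 T)
  /\
  ((forall w, admissible a b T w -> deltaS r a b T u w = 0) <->
   (forall x t, a <= x <= b -> 0 <= t <= T -> rHS r u x t = 0)).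
Proof.
  intros H2 He Hab HT Hu Hbd.
  pose proof (sm_rHS r u H2 He Hu) as Hr.
  split; [intros w Hw; apply part1; assumption|].
  split.
  - intros Hall.
    apply closure_zero; [apply sm_cont, Hr|assumption|assumption|].
    intros x0 t0 Hx Ht.
    destruct (Req_dec (rHS r u x0 t0) 0) as [E|NE]; [exact E|exfalso].
    set (w0 := fun x t => rHS r u x t * (((x - a) * (b - x)) * (t * (T - t)))).
    assert (Hw0s : smooth w0).
    { unfold w0. apply sm_mult; [exact Hr|]. apply sm_mult; apply sm_mult.
      - apply sm_minus; [apply sm_x|apply sm_const].
      - apply sm_minus; [apply sm_const|apply sm_x].
      - apply sm_t.
      - apply sm_minus; [apply sm_const|apply sm_t]. }
    assert (Hadm : admissible a b T w0).
    { split; [exact Hw0s|]. split.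
      - intros x _. unfold w0. split; ring.
      - intros t _. unfold w0. split; ring. }
    pose proof (Hall w0 Hadm) as Z.
    rewrite part1 in Z by assumption.
    set (g := fun x t => rHS r u x t * w0 x t).
    assert (Hg : smooth g) by (unfold g; apply sm_mult; assumption).
    assert (Gnn : forall x t, a < x < b -> 0 < t < T -> 0 <= g x t).
    { intros x t Hx' Ht'. unfold g, w0.
      assert (P1 : 0 < (x - a) * (b - x)) by (apply Rmult_lt_0_compat; lra).
      assert (P2 : 0 < t * (T - t)) by (apply Rmult_lt_0_compat; lra).
      assert (P3 : 0 <= rHS r u x t * rHS r u x t) by nra.
      replace (rHS r u x t * (rHS r u x t * ((x - a) * (b - x) * (t * (T - t)))))
        with ((rHS r u x t * rHS r u x t) * ((x - a) * (b - x) * (t * (T - t)))) by ring.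
      apply Rmult_le_pos; [exact P3|]. apply Rmult_le_pos; lra. }
    assert (Pos : 0 < RInt (fun t => RInt (fun x => g x t) a b) 0 T).
    { apply (pos_lemma _ 0 T t0); [lra| | |].
      - intros t _. apply (param_cont g), Hg.
      - intros t Ht'. apply RInt_ge_0; [lra|apply (ex_sm g), Hg|].
        intros x Hx'. apply Gnn; lra.
      - apply (pos_lemma _ a b x0); [lra| | |].
        + intros x _. apply (cont2_cx g), sm_cont, Hg.
        + intros x Hx'. apply Gnn; lra.
        + unfold g, w0.
          assert (P1 : 0 < (x0 - a) * (b - x0)) by (apply Rmult_lt_0_compat; lra).
          assert (P2 : 0 < t0 * (T - t0)) by (apply Rmult_lt_0_compat; lra).
          assert (P3 : 0 < rHS r u x0 t0 * rHS r u x0 t0).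
          { destruct (Rlt_or_le 0 (rHS r u x0 t0)); [nra|].
            assert (rHS r u x0 t0 < 0) by lra. nra. }
          replace (rHS r u x0 t0 * (rHS r u x0 t0 * ((x0 - a) * (b - x0) * (t0 * (T - t0)))))
            with ((rHS r u x0 t0 * rHS r u x0 t0) * ((x0 - a) * (b - x0) * (t0 * (T - t0)))) by ring.
          apply Rmult_lt_0_compat; [exact P3|]. apply Rmult_lt_0_compat; lra. }
    unfold g in Pos. lra.
  - intros Hz w Hw. rewrite part1 by assumption.
    rewrite (RInt_ext _ (fun _ => 0)).
    + apply RInt_zero.
    + intros t Ht. rewrite Rmin_left in Ht by lra. rewrite Rmax_right in Ht by lra.
      rewrite (RInt_ext _ (fun _ => 0)).
      * apply RInt_zero.
      * intros x Hx. rewrite Rmin_left in Hx by lra. rewrite Rmax_right in Hx by lra.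
        rewrite Hz by lra. apply Rmult_0_l.
Qed.
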